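(* For every $v\in\mathrm{Pl}_n$, the graph $G_v$ is the disjoint union of a complete multipartite graph and a set of isolated nodes; i.e., if $U\subseteq[n]$ is the set of non-isolated nodes of $G_v$, then the induced subgraph of $G_v$ on $U$ is a complete multipartite graph (equivalently, non-adjacency is an equivalence relation on $U$).
   Context: Coordinates of $\mathbb R^{\binom n2}$ are indexed by unordered pairs $\{i,j\}\subset[n]$, written $v_{ij}=v_{ji}$. $\mathrm{Pl}_n=\{v\in\mathbb R_{\ge0}^{\binom n2} : v_{ij}v_{kl}\le v_{ik}v_{jl}+v_{il}v_{jk}\ \text{for all pairwise distinct } i,j,k,l\in[n]\}$. For $v\in\mathrm{Pl}_n$, $G_v$ is the graph with vertex set $[n]$ in which $\{i,j\}$ is an edge iff $v_{ij}>0$. *)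

(* Defs.v *)
From Stdlib Require Import Reals.
Open Scope R_scope.

(* Vertex set [n] is represented as {0,...,n-1} (nat with i < n).
   A vector v in R^{binom n 2} is represented as a symmetric function
   v : nat -> nat -> R; only the values v i j with i <> j, i,j < n matter. *)

Definition sym_vec (n : nat) (v : nat -> nat -> R) : Prop :=
  forall i j, (i < n)%nat -> (j < n)%nat -> i <> j -> v i j = v j i.

Definition Pl (n : nat) (v : nat -> nat -> R) : Prop :=
  sym_vec n v /\
  (forall i j, (i < n)%nat -> (j < n)%nat -> i <> j -> 0 <= v i j) /\
  (forall i j k l, (i < n)%nat -> (j < n)%nat -> (k < n)%nat -> (l < n)%nat ->
     i <> j -> i <> k -> i <> l -> j <> k -> j <> l -> k <> l ->
     v i j * v k l <= v i k * v j l + v i l * v j k).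

Definition adj (v : nat -> nat -> R) (i j : nat) : Prop := i <> j /\ 0 < v i j.

Definition nonisolated (n : nat) (v : nat -> nat -> R) (i : nat) : Prop :=
  (i < n)%nat /\ exists j, (j < n)%nat /\ adj v i j.

Definition complete_multipartite_on (U : nat -> Prop) (E : nat -> nat -> Prop) : Prop :=
  exists f : nat -> nat,
    forall i j, U i -> U j -> i <> j -> (E i j <-> f i <> f j).

(* Main.v *)
Require Import Defs.
From Stdlib Require Import Reals Lra Lia Psatz List Arith Bool Classical.
Open Scope R_scope.


Lemma adj_sym n v a b : Pl n v -> (a < n)%nat -> (b < n)%nat -> adj v a b -> adj v b a.
Proof.
  intros [Hs _] Ha Hb [H1 H2]. split; auto. rewrite Hs; auto.
Qed.

Lemma trans_nadj n v a b c : Pl n v -> nonisolated n v b -> (a < n)%nat -> (c < n)%nat ->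
  ~ adj v a b -> ~ adj v b c -> ~ adj v a c.
Proof.
  intros HP [Hb [l [Hl [Hbl Hvbl]]]] Ha Hc Hab Hbc [Hac Hvac].
  destruct HP as [Hs [Hn Hineq]].
  destruct (Nat.eq_dec a b) as [->|Hab']; [apply Hbc; split; auto|].
  destruct (Nat.eq_dec b c) as [->|Hbc']; [apply Hab; split; auto|].
  assert (Vab : v a b = 0).
  { assert (0 <= v a b) by (apply Hn; auto).
    destruct (Rlt_dec 0 (v a b)); [exfalso; apply Hab; split; auto | lra]. }
  assert (Vbc : v b c = 0).
  { assert (0 <= v b c) by (apply Hn; auto).
    destruct (Rlt_dec 0 (v b c)); [exfalso; apply Hbc; split; auto | lra]. }
  assert (Hla : l <> a).
  { intros ->. rewrite Hs in Vab; auto. lra. }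
  assert (Hlc : l <> c).
  { intros ->. lra. }
  assert (Vcb : v c b = 0) by (rewrite Hs; auto).
  pose proof (Hineq a c b l Ha Hc Hb Hl Hac Hab' (not_eq_sym Hla) (not_eq_sym Hbc')
     (not_eq_sym Hlc) Hbl) as I.
  rewrite Vab, Vcb in I.
  assert (0 <= v a l) by (apply Hn; auto).
  nra.
Qed.

Definition adjb (v : nat -> nat -> R) (i j : nat) : bool :=
  negb (Nat.eqb i j) && (if Rlt_dec 0 (v i j) then true else false).

Lemma adjb_spec v i j : adjb v i j = true <-> adj v i j.
Proof.
  unfold adjb, adj. rewrite andb_true_iff, negb_true_iff, Nat.eqb_neq.
  destruct (Rlt_dec 0 (v i j)); split; intros [A B]; split; auto; try discriminate; contradiction.
Qed.

Definition Ub n v j : bool := Nat.ltb j n && existsb (fun k => adjb v j k) (seq 0 n).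

Lemma Ub_spec n v j : Ub n v j = true <-> nonisolated n v j.
Proof.
  unfold Ub, nonisolated. rewrite andb_true_iff, Nat.ltb_lt, existsb_exists.
  split.
  - intros [H [k [Hk Hb]]]. apply in_seq in Hk. split; auto.
    exists k. split; [lia|]. apply adjb_spec; auto.
  - intros [H [k [Hk Hb]]]. split; auto. exists k. split.
    + apply in_seq; lia.
    + apply adjb_spec; auto.
Qed.

Definition Pb n v i j : bool := negb (adjb v i j) && Ub n v j.

Lemma find_ext {A} (p q : A -> bool) l :
  (forall x, In x l -> p x = q x) -> find p l = find q l.
Proof.
  induction l; simpl; auto. intros H. rewrite H by auto.
  destruct (q a); auto.
Qed.

Definition fl n v i : nat :=
  match find (Pb n v i) (seq 0 n) with Some j => j | None => 0%nat end.

Theorem mainTheorem12 (n : nat) (v : nat -> nat -> R) :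
  Pl n v ->
  complete_multipartite_on (nonisolated n v) (adj v).
Proof.
  intros HP. exists (fl n v).
  assert (Hsome : forall i, nonisolated n v i ->
            exists m, find (Pb n v i) (seq 0 n) = Some m /\ (m < n)%nat /\
                      ~ adj v i m /\ nonisolated n v m).
  { intros i Hi.
    destruct (find (Pb n v i) (seq 0 n)) as [m|] eqn:E.
    - apply find_some in E. destruct E as [E1 E2]. apply in_seq in E1.
      unfold Pb in E2. apply andb_true_iff in E2. destruct E2 as [E2 E3].
      exists m. split; auto. split; [lia|]. split.
      + intro Ha. apply adjb_spec in Ha. rewrite Ha in E2. discriminate.
      + apply Ub_spec; auto.
    - exfalso. pose proof (find_none _ _ E i) as X.
      assert (In i (seq 0 n)) by (destruct Hi; apply in_seq; lia).
      specialize (X H). unfold Pb in X.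
      assert (adjb v i i = false).
      { unfold adjb. rewrite Nat.eqb_refl. reflexivity. }
      rewrite H0 in X. simpl in X. apply Ub_spec in Hi. congruence. }
  intros i j Hi Hj Hij. split.
  - intros Hadj Heq. unfold fl in Heq.
    destruct (Hsome i Hi) as [m [E1 [Hm [Him Um]]]].
    destruct (Hsome j Hj) as [m' [E1' [Hm' [Hjm Um']]]].
    rewrite E1, E1' in Heq. subst m'.
    assert (Hmj : ~ adj v m j).
    { intro X. apply Hjm. apply (adj_sym n); auto. destruct Hj; auto. }
    apply (trans_nadj n v i m j HP Um) in Him; auto; destruct Hi, Hj; auto.
  - intros Hf. destruct (classic (adj v i j)) as [|Hn]; auto. exfalso. apply Hf.
    unfold fl. rewrite (find_ext (Pb n v i) (Pb n v j)); auto.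
    intros x Hx. apply in_seq in Hx. unfold Pb.
    destruct (Ub n v x) eqn:Ux; [|rewrite !andb_false_r; auto].
    apply Ub_spec in Ux. rewrite !andb_true_r. f_equal.
    destruct Hi as [Hin Hi'], Hj as [Hjn Hj'].
    destruct (adjb v i x) eqn:A1; destruct (adjb v j x) eqn:A2; auto; exfalso.
    +
      apply adjb_spec in A1.
      assert (~ adj v j x) by (intro X; apply adjb_spec in X; congruence).
      assert (~ adj v x j) by (intro X; apply H; apply (adj_sym n); auto; lia).
      apply (trans_nadj n v i j x HP (conj Hjn Hj')) in Hn; auto; lia.
    + apply adjb_spec in A2.
      assert (~ adj v i x) by (intro X; apply adjb_spec in X; congruence).
      assert (Hji : ~ adj v j i) by (intro X; apply Hn; apply (adj_sym n); auto).
      apply (trans_nadj n v j i x HP (conj Hin Hi')) in Hji; auto; lia.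
Qed.
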